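(* For any $n,T\in\mathbb{N}$ and $\epsilon>0$, the exponential projected walk algorithm $\mathrm{EPW}(T,\epsilon)$ is an $\epsilon$-differentially private prediction algorithm.
   Context: Let $N\in\mathbb{N}$, $[N]=\{1,\dots,N\}$. For $A\le B$, $\mathrm{proj}_{[A,B]}(u)$ denotes the projection of $u\in\mathbb{R}$ onto $[A,B]$. The algorithm $\mathrm{EPW}(T,\epsilon)$ takes a dataset $S=((x_1,y_1),\dots,(x_n,y_n))\in([N]\times\{0,1\})^n$, arranged in sorted order $x_1\le x_2\le\dots\le x_n$, and a query point $x\in[N]$. Let $t$ be the number of examples with $x_i\le x$. Set $v_0=0$ and for $i=1,\dots,t$ set $v_i=\mathrm{proj}_{[-T,T]}(v_{i-1}+(2y_i-1))$. Output $b=1$ with probability $\frac{e^{\epsilon v_t/2}}{1+e^{\epsilon v_t/2}}$ and $b=0$ otherwise. A prediction algorithm $M$ is an $\epsilon$-differentially private prediction algorithm if for every query point $x$, for all datasets $S,S'$ differing in a single element and every $b$, $\Pr[M(S,x)=b]\le e^{\epsilon}\Pr[M(S',x)=b]$. *)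

(* Defs.v *)
From HB Require Import structures.
From mathcomp Require Import all_boot all_order all_algebra.
From mathcomp Require Import all_classical all_reals.
From mathcomp Require Import sequences exp.
Set Implicit Arguments. Unset Strict Implicit. Unset Printing Implicit Defensive.
Import Order.TTheory GRing.Theory Num.Theory.
Local Open Scope ring_scope.

Definition projT (T : nat) (u : int) : int :=
  Num.max (- (T%:Z)) (Num.min (T%:Z) u).

Definition walk (T : nat) (ys : seq bool) : int :=
  foldl (fun v (y : bool) => projT T (v + (2 * (y : nat)%:Z - 1))) 0 ys.

Definition sorted_data (S : seq (nat * bool)) : seq (nat * bool) :=
  sort (fun p q : nat * bool => (p.1 <= q.1)%N) S.

Definition epw_value (T : nat) (S : seq (nat * bool)) (x : nat) : int :=
  let t := count (fun p : nat * bool => (p.1 <= x)%N) S in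
  walk T [seq p.2 | p <- take t (sorted_data S)].

(* Pr[EPW(T,eps)(S,x) = b] *)
Definition epw_prob (R : realType) (T : nat) (eps : R)
    (S : seq (nat * bool)) (x : nat) (b : bool) : R :=
  let e := expR (eps * (epw_value T S x)%:~R / 2) in
  if b then e / (1 + e) else 1 - e / (1 + e).

Definition dataset (N n : nat) (S : seq (nat * bool)) : Prop :=
  size S = n /\ all (fun p : nat * bool => (1 <= p.1 <= N)%N) S.

Definition neighbors (S S' : seq (nat * bool)) : Prop :=
  size S = size S' /\
  exists i, forall j, j != i -> nth (0%N, false) S j = nth (0%N, false) S' j.

(* Main.v *)
Require Import Defs.
From HB Require Import structures.
From mathcomp Require Import all_boot all_order all_algebra.
From mathcomp Require Import all_classical all_reals.
From mathcomp Require Import sequences exp.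
From mathcomp Require Import zify ring lra.
Import Order.TTheory GRing.Theory Num.Theory.
Local Open Scope ring_scope.

Lemma projT_ne T (a b : int) : `|projT T a - projT T b| <= `|a - b|.
Proof. rewrite /projT. lia. Qed.
Lemma projT_id T (a : int) : projT T (projT T a) = projT T a.
Proof. rewrite /projT. lia. Qed.
Lemma projT_step T (u : int) (y : bool) : projT T u = u ->
  `|projT T (u + (2 * (y : nat)%:Z - 1)) - u| <= 1.
Proof. rewrite /projT; case: y => /=; lia. Qed.

Definition stp T (v : int) (y : bool) := projT T (v + (2 * (y : nat)%:Z - 1)).

Lemma foldl_ne T l (u v : int) :
  `|foldl (stp T) u l - foldl (stp T) v l| <= `|u - v|.
Proof.
elim: l u v => //= y l IH u v.
apply: le_trans (IH _ _) _; rewrite /stp.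
set d := (_ - 1)%R; have := projT_ne T (u + d) (v + d); lia.
Qed.

Lemma foldl_inv T l (u : int) : projT T u = u ->
  projT T (foldl (stp T) u l) = foldl (stp T) u l.
Proof. elim: l u => //= y l IH u _; apply: IH; exact: projT_id. Qed.

Lemma walk_del T l1 y l2 :
  `|walk T (l1 ++ y :: l2) - walk T (l1 ++ l2)| <= 1.
Proof.
rewrite /walk -/(stp T) !foldl_cat /=.
set u := foldl _ 0 l1.
have hu : projT T u = u by apply: foldl_inv; rewrite /projT; lia.
apply: le_trans (foldl_ne _ _ _ _) _; exact: projT_step.
Qed.

Section Seqs.
Local Open Scope nat_scope.

Lemma mask_del (T : eqType) (m : bitseq) (s : seq T) :
  size (mask m s) = (size s).-1 -> 0 < size s ->
  exists l1 a l2, s = l1 ++ a :: l2 /\ mask m s = l1 ++ l2.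
Proof.
elim: s m => // x s IH [|b m] /=.
  move=> h _; case: s h IH => // _ _; by exists [::], x, [::].
case: b => /=.
  move=> [h] _; case: s h IH => [|z s] /=; first by move=> h; lia.
  move=> [h] IH; have [l1 [a [l2 [e1 e2]]]] := IH m h isT.
  exists (x :: l1), a, l2; split; first by rewrite /= -e1.
  by move: e2; case: m {h IH} => [|[] m] /= ->.
move=> h _; exists [::], x, s; split => //.
have sub := mask_subseq m s.
have := size_subseq_leqif sub; rewrite h => -[_ /esym].
by rewrite eqxx => /eqP.
Qed.

Definition lex (p q : nat * bool) := p.1 <= q.1.

Lemma sort_del (s1 s2 : seq (nat * bool)) a :
  exists l1 b l2, sort lex (s1 ++ a :: s2) = l1 ++ b :: l2 /\
                  sort lex (s1 ++ s2) = l1 ++ l2.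
Proof.
have tot : total lex by move=> ??; rewrite /lex leq_total.
have tr : transitive lex by move=> ???; rewrite /lex; apply: leq_trans.
pose m := nseq (size s1) true ++ false :: nseq (size s2) true.
have hm : mask m (s1 ++ a :: s2) = s1 ++ s2.
  rewrite mask_cat ?size_nseq // mask_true ?size_nseq //= mask_true ?size_nseq //.
have [ms hms] := mask_sort tot tr (s1 ++ a :: s2) m.
rewrite hm in hms.
have := @mask_del _ ms (sort lex (s1 ++ a :: s2)).
rewrite hms !size_sort !size_cat /= addnS => /(_ erefl isT).
move=> [l1 [b [l2 [e1 e2]]]]; by exists l1, b, l2.
Qed.

Lemma take_count_sorted x (l : seq (nat * bool)) : sorted lex l ->
  take (count (fun p => p.1 <= x) l) l = seq.filter (fun p => p.1 <= x) l.
Proof.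
elim: l => //= a l IH hs.
have hl : sorted lex l := path_sorted hs.
case: ifP => ha /=; first by rewrite IH.
have hall : all (lex a) l.
  by apply: order_path_min hs => ???; rewrite /lex; apply: leq_trans.
have -> : seq.filter (fun p => p.1 <= x) l = [::].
  apply/eqP; rewrite -[_ == _]negbK -has_filter; apply/hasP => -[p pl px].
  move/allP: hall => /(_ p pl); rewrite /lex => ap.
  by move: ha; rewrite (leq_trans ap px).
have -> : count (fun p => p.1 <= x) l = 0.
  apply/eqP; rewrite -leqn0 leqNgt -has_count; apply/hasP => -[p pl px].
  move/allP: hall => /(_ p pl); rewrite /lex => ap.
  by move: ha; rewrite (leq_trans ap px).
by [].
Qed.

End Seqs.

Lemma epw_valueE T S x :
  epw_value T S x = walk T [seq p.2 | p <- sort lex (seq.filter (fun p => (p.1 <= x)%N) S)].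
Proof.
rewrite /epw_value /sorted_data -/lex.
have tot : total lex by move=> ??; rewrite /lex leq_total.
have tr : transitive lex by move=> ???; rewrite /lex; apply: leq_trans.
rewrite -(count_sort lex) take_count_sorted ?sort_sorted // filter_sort //.
Qed.
Lemma prob_ratio (R : realType) (eps : R) (v v' : int) (b : bool) :
  0 < eps -> `|v - v'| <= 2 ->
  (let e := expR (eps * v%:~R / 2) in if b then e / (1 + e) else 1 - e / (1 + e))
  <= expR eps *
  (let e := expR (eps * v'%:~R / 2) in if b then e / (1 + e) else 1 - e / (1 + e)).
Proof.
move=> he hv /=.
have h1 : ((v - v')%:~R : R) <= 2%:~R by rewrite ler_int; lia.
have h2 : ((v' - v)%:~R : R) <= 2%:~R by rewrite ler_int; lia.
rewrite !rmorphB /= in h1 h2.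
set x := (v%:~R : R) in h1 h2 *; set y := (v'%:~R : R) in h1 h2 *.
have hAB : expR (eps * x / 2) <= expR eps * expR (eps * y / 2).
  rewrite -expRD ler_expR; nra.
have hBA : expR (eps * y / 2) <= expR eps * expR (eps * x / 2).
  rewrite -expRD ler_expR; nra.
have hE : 1 <= expR eps by rewrite -expR0 ler_expR ltW.
move: hAB hBA hE.
have : 0 < expR (eps * x / 2) := expR_gt0 _.
have : 0 < expR (eps * y / 2) := expR_gt0 _.
move: (expR (eps * x / 2)) (expR (eps * y / 2)) (expR eps) => A B E hB hA hAB hBA hE.
have hA1 : 1 + A != 0 by rewrite gt_eqF // ltr_wpDl.
have hB1 : 1 + B != 0 by rewrite gt_eqF // ltr_wpDl.
have hAB0 : 0 < (1 + A) * (1 + B) by rewrite mulr_gt0 // ltr_wpDl // ltW.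
rewrite -subr_ge0.
have hABE : A * B <= E * (A * B) by rewrite ler_peMl // mulr_ge0 // ltW.
case: b.
  have -> : E * (B / (1 + B)) - A / (1 + A) =
            (E * B * (1 + A) - A * (1 + B)) / ((1 + A) * (1 + B)). by field; rewrite hA1 hB1.
  apply: divr_ge0; [|exact: ltW].
  nra.
have -> : E * (1 - B / (1 + B)) - (1 - A / (1 + A)) =
          (E * (1 + A) - (1 + B)) / ((1 + A) * (1 + B)) by field; rewrite hA1 hB1.
apply: divr_ge0; [|exact: ltW].
nra.
Qed.

Lemma vdiff T x s1 (a : nat * bool) s2 :
  `|epw_value T (s1 ++ a :: s2) x - epw_value T (s1 ++ s2) x| <= 1.
Proof.
rewrite !epw_valueE !filter_cat /=.
case: ifP => _; last by rewrite subrr.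
have [l1 [b [l2 [-> ->]]]] := sort_del (seq.filter (fun p => (p.1 <= x)%N) s1)
   (seq.filter (fun p => (p.1 <= x)%N) s2) a.
rewrite !map_cat /=; exact: walk_del.
Qed.

Lemma nb_split (S S' : seq (nat * bool)) : neighbors S S' ->
  S = S' \/ exists s1 s2 a a', S = s1 ++ a :: s2 /\ S' = s1 ++ a' :: s2.
Proof.
move=> [hs [i hi]].
case: (ltnP i (size S)) => hi'.
  right; exists (take i S), (drop i.+1 S), (nth (0%N, false) S i),
    (nth (0%N, false) S' i); split.
    by rewrite -drop_nth // cat_take_drop.
  have -> : take i S = take i S'.
    apply: (@eq_from_nth _ (0%N, false)); first by rewrite !size_take hs.
    move=> j; rewrite size_take hi' => hj; rewrite !nth_take //.
    apply: hi; apply/eqP; lia.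
  have -> : drop i.+1 S = drop i.+1 S'.
    apply: (@eq_from_nth _ (0%N, false)); first by rewrite !size_drop hs.
    move=> j _; rewrite !nth_drop; apply: hi; apply/eqP; lia.
  by rewrite -drop_nth -?hs // cat_take_drop.
left; apply: (@eq_from_nth _ (0%N, false)) => // j hj.
apply: hi; apply/eqP; lia.
Qed.

Theorem lemma23 (R : realType) (N n T : nat) (eps : R) :
  0 < eps ->
  forall (S S' : seq (nat * bool)) (x : nat) (b : bool),
    dataset N n S -> dataset N n S' -> neighbors S S' ->
    (1 <= x <= N)%N ->
    epw_prob T eps S x b <= expR eps * epw_prob T eps S' x b.
Proof.
move=> he S S' x b _ _ hn _.
rewrite /epw_prob; apply: prob_ratio => //.
case: (@nb_split S S' hn) => [-> | [s1 [s2 [a [a' [-> ->]]]]]].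
  by rewrite subrr.
have := vdiff T x s1 a s2; have := vdiff T x s1 a' s2; lia.
Qed.
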